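(* Let $V(x)=x(1+xU(x))$, where $U$ is absolutely monotonic on some interval $(0,R)$ (i.e. $U$ has a power series expansion $U(x)=a_1+a_2x+a_3x^2+\dots$ with non-negative coefficients there). Define $s(z)=\exp\left(\int\frac{dz}{V(z)}\right)$ and $b(z)=\exp\left(\int\frac{z\,dz}{V(z)}\right)$ (with arbitrary fixed antiderivatives). Then $V$ is the covariance of the power series distribution of the function $\omega(y)=b(s^{-1}(y))$.
   Context: For a power series $\omega(y)=\sum_k a_ky^k$ with non-negative coefficients and positive radius of convergence, the power series distribution (PSD) of $\omega$ with parameter $y>0$ is the law on $\{0,1,2,\dots\}$ given by $P\{\xi=k\}=a_ky^k/\omega(y)$. Its mean is $x(y)=y\omega'(y)/\omega(y)$ and its variance is $y\,x'(y)>0$, so $x(\cdot)$ has an inverse $y=f(x)$ on its range. The covariance of the PSD of $\omega$ is the function $V(x)=f(x)/f'(x)$, i.e. the variance expressed as a function of the mean $x$. Here $s^{-1}$ denotes the inverse function of $s$. *)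

(* Defs.v *)
From Stdlib Require Import Reals.
From Coquelicot Require Import Coquelicot.
Open Scope R_scope.

Definition psd_mean (c : nat -> R) (y : R) : R :=
  y * Derive (PSeries c) y / PSeries c y.

Definition psd_covariance (c : nat -> R) (rho : R) (Vf : R -> R) : Prop :=
  forall f : R -> R,
    (forall y, 0 < y < rho -> f (psd_mean c y) = y) ->
    forall y, 0 < y < rho ->
      ex_derive f (psd_mean c y) /\
      Vf (psd_mean c y) = f (psd_mean c y) / Derive f (psd_mean c y).

(* Main.v *)
Require Import Defs.
From Stdlib Require Import Reals.
From Coquelicot Require Import Coquelicot.
From Stdlib Require Import Lra Lia.
Open Scope R_scope.


Lemma psum_le_term (f : nat -> R) (i N : nat) :
  (forall n, 0 <= f n) -> (i <= N)%nat -> f i <= sum_f_R0 f N.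
Proof.
  intros Hf HiN. induction N as [|N IH].
  - replace i with 0%nat by lia. simpl. lra.
  - destruct (Nat.eq_dec i (S N)) as [->|Hne].
    + rewrite tech5. generalize (cond_pos_sum f N Hf). lra.
    + rewrite tech5. assert (f i <= sum_f_R0 f N) by (apply IH; lia).
      generalize (Hf (S N)); lra.
Qed.

Lemma psum_mono (f : nat -> R) (M N : nat) :
  (forall n, 0 <= f n) -> (M <= N)%nat -> sum_f_R0 f M <= sum_f_R0 f N.
Proof.
  intros Hf H. induction H as [|N H IH]. lra.
  rewrite tech5. generalize (Hf (S N)); lra.
Qed.

Lemma psum_growing (f : nat -> R) : (forall n, 0 <= f n) -> Un_growing (sum_f_R0 f).
Proof. intros Hf n. rewrite tech5. generalize (Hf (S n)); lra. Qed.

Lemma psum_le_lim (f : nat -> R) l N :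
  (forall n, 0 <= f n) -> infinite_sum f l -> sum_f_R0 f N <= l.
Proof.
  intros Hf Hl. apply (growing_ineq (sum_f_R0 f)). now apply psum_growing. exact Hl.
Qed.

Lemma pseries_bounded (f : nat -> R) B :
  (forall n, 0 <= f n) -> (forall N, sum_f_R0 f N <= B) ->
  exists l, infinite_sum f l /\ l <= B.
Proof.
  intros Hf HB.
  destruct (growing_cv (sum_f_R0 f)) as [l Hl].
  - now apply psum_growing.
  - exists B. intros x [N ->]. apply HB.
  - exists l. split. exact Hl.
    apply Rnot_lt_le. intro H.
    destruct (Hl (l - B)) as [N HN]. lra.
    specialize (HN N (le_n N)). specialize (HB N). unfold R_dist in HN.
    rewrite Rabs_left1 in HN; lra.
Qed.

Lemma sum_ext_zero (f : nat -> R) n m :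
  (n <= m)%nat -> (forall k, (n < k <= m)%nat -> f k = 0) ->
  sum_f_R0 f m = sum_f_R0 f n.
Proof.
  intros H. induction H as [|m H IH]; intros Hz. reflexivity.
  rewrite tech5, Hz by lia. rewrite IH. lra. intros k Hk; apply Hz; lia.
Qed.

Lemma sum_switch_R (u : nat -> nat -> R) (N : nat) :
  sum_f_R0 (fun n => sum_f_R0 (fun k => u k n) N) N =
  sum_f_R0 (fun k => sum_f_R0 (u k) N) N.
Proof.
  rewrite <- !sum_n_Reals.
  rewrite (sum_n_ext (fun n => sum_f_R0 (fun k => u k n) N) (fun n => sum_n (fun k => u k n) N))
    by (intros; now rewrite sum_n_Reals).
  rewrite (sum_n_ext (fun k => sum_f_R0 (u k) N) (fun k => sum_n (u k) N))
    by (intros; now rewrite sum_n_Reals).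
  symmetry. apply (sum_n_switch (G := R_AbelianMonoid)).
Qed.

Lemma cv_finite_sum (t : nat -> nat -> R) (A : nat -> R) K :
  (forall k, Un_cv (fun N => t k N) (A k)) ->
  Un_cv (fun N => sum_f_R0 (fun k => t k N) K) (sum_f_R0 A K).
Proof.
  intros H. induction K as [|K IH]. simpl. apply H.
  simpl. apply CV_plus. apply IH. apply H.
Qed.

Lemma tonelli_tri (t : nat -> nat -> R) (A : nat -> R) (S : R) :
  (forall k n, 0 <= t k n) -> (forall k n, (n < k)%nat -> t k n = 0) ->
  (forall k, infinite_sum (t k) (A k)) -> infinite_sum A S ->
  infinite_sum (fun n => sum_f_R0 (fun k => t k n) n) S.
Proof.
  intros Ht Hz HA HS.
  assert (HA0 : forall k, 0 <= A k).
  { intro k. apply Rle_trans with (sum_f_R0 (t k) 0). simpl; apply Ht.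
    apply psum_le_lim; auto. }
  assert (Hsq : forall N, sum_f_R0 (fun n => sum_f_R0 (fun k => t k n) n) N =
                     sum_f_R0 (fun k => sum_f_R0 (t k) N) N).
  { intro N. rewrite <- sum_switch_R. apply sum_eq. intros n Hn.
    symmetry. apply sum_ext_zero. lia. intros k Hk. apply Hz. lia. }
  assert (Hup : forall N, sum_f_R0 (fun n => sum_f_R0 (fun k => t k n) n) N <= S).
  { intro N. rewrite Hsq. apply Rle_trans with (sum_f_R0 A N).
    apply sum_Rle. intros; apply psum_le_lim; auto. apply psum_le_lim; auto. }
  assert (Hlo : forall K N, (K <= N)%nat ->
     sum_f_R0 (fun k => sum_f_R0 (t k) N) K <= sum_f_R0 (fun n => sum_f_R0 (fun k => t k n) n) N).
  { intros K N HKN. rewrite Hsq. apply psum_mono; auto.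
    intro k. apply cond_pos_sum. auto. }
  intros eps Heps.
  destruct (HS (eps/2)) as [K HK]. lra.
  specialize (HK K (le_n K)). unfold R_dist in HK.
  pose proof (cv_finite_sum (fun k N => sum_f_R0 (t k) N) A K HA) as HC.
  destruct (HC (eps/2)) as [N0 HN0]. lra.
  exists (max K N0). intros N HN. unfold R_dist.
  assert (h1 := Hup N).
  assert (h2 := Hlo K N ltac:(lia)).
  specialize (HN0 N ltac:(lia)). unfold R_dist in HN0.
  assert (h3 : sum_f_R0 A K <= S) by (apply psum_le_lim; auto).
  rewrite Rabs_left1 in HK by lra.
  rewrite Rabs_left1 by lra.
  apply Rabs_def2 in HN0. lra.
Qed.

Lemma ps_is (a : nat -> R) x l : is_pseries a x l <-> infinite_sum (fun n => a n * x ^ n) l.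
Proof. rewrite is_pseries_R. apply is_series_Reals. Qed.

Fixpoint ppow (p : nat -> R) (k : nat) : nat -> R :=
  match k with
  | O => fun n => match n with O => 1 | _ => 0 end
  | S k => PS_mult p (ppow p k)
  end.

Definition compc (w p : nat -> R) (n : nat) : R :=
  sum_f_R0 (fun k => w k * ppow p k n) n.

Lemma ppow_nonneg p k n : (forall i, 0 <= p i) -> 0 <= ppow p k n.
Proof.
  intros Hp. revert n. induction k as [|k IH]; intro n; simpl.
  - destruct n; lra.
  - unfold PS_mult. apply cond_pos_sum. intro i. apply Rmult_le_pos; auto.
Qed.

Lemma ppow_lt p k n : p 0%nat = 0 -> (n < k)%nat -> ppow p k n = 0.
Proof.
  intros Hp0. revert n. induction k as [|k IH]; intros n Hn. lia.
  simpl. unfold PS_mult. apply sum_eq_R0. intros i Hi.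
  destruct i as [|i]. rewrite Hp0; ring.
  rewrite IH by lia. ring.
Qed.

Lemma ppow_agree p q m : (forall i, (i <= m)%nat -> p i = q i) ->
  forall k j, (j <= m)%nat -> ppow p k j = ppow q k j.
Proof.
  intros H k. induction k as [|k IH]; intros j Hj. reflexivity.
  simpl. unfold PS_mult. apply sum_eq. intros i Hi.
  rewrite H by lia. rewrite IH by lia. reflexivity.
Qed.

Lemma ppow_agree2 p q n k : p 0%nat = 0 -> q 0%nat = 0 ->
  (forall i, (i < n)%nat -> p i = q i) -> (1 <= k)%nat ->
  ppow p (S k) n = ppow q (S k) n.
Proof.
  intros Hp Hq H Hk. simpl. unfold PS_mult. apply sum_eq. intros i Hi.
  destruct i as [|i]. rewrite Hp, Hq; ring.
  destruct (Nat.eq_dec (S i) n) as [E|E].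
  - replace (n - S i)%nat with 0%nat by lia.
    rewrite (ppow_lt p), (ppow_lt q) by (auto; lia). ring.
  - rewrite H by lia. rewrite (ppow_agree p q (n - 1)). reflexivity.
    intros; apply H; lia. lia.
Qed.

Lemma ppow_1 p n : ppow p 1 n = p n.
Proof.
  simpl. unfold PS_mult. destruct n as [|n]. simpl. ring.
  rewrite tech5. rewrite sum_eq_R0. replace (S n - S n)%nat with 0%nat by lia. ring.
  intros i Hi. replace (S n - i)%nat with (S (n - i)) by lia. ring.
Qed.

Lemma fin_series (a : nat -> R) x N : (forall n, (N < n)%nat -> a n = 0) ->
  is_pseries a x (sum_f_R0 (fun n => a n * x ^ n) N).
Proof.
  intros H. apply ps_is. intros eps Heps. exists N. intros n Hn.
  unfold R_dist. rewrite (sum_ext_zero _ N n) by (auto; intros k Hk; rewrite H by lia; ring).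
  rewrite Rminus_diag, Rabs_R0. lra.
Qed.

Lemma rad_ge (a : nat -> R) x : (forall n, 0 <= a n) -> 0 < x -> ex_pseries a x ->
  Rbar_le x (CV_radius a).
Proof.
  intros Ha Hx [l Hl]. destruct (CV_radius_bounded a) as [Hub _].
  apply Hub. exists l. intro n. apply ps_is in Hl.
  rewrite Rabs_pos_eq by (apply Rmult_le_pos; auto; apply pow_le; lra).
  apply Rle_trans with (sum_f_R0 (fun n => a n * x ^ n) n).
  apply (psum_le_term (fun n => a n * x ^ n)). intro; apply Rmult_le_pos; auto; apply pow_le; lra. lia.
  apply psum_le_lim; auto. intro; apply Rmult_le_pos; auto; apply pow_le; lra.
Qed.

Lemma rad_gt (a : nat -> R) X y : (forall n, 0 <= a n) ->
  (forall z, 0 < z < X -> ex_pseries a z) -> 0 <= y < X ->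
  Rbar_lt (Rabs y) (CV_radius a).
Proof.
  intros Ha Hex Hy. apply Rbar_lt_le_trans with ((y + X) / 2).
  simpl. rewrite Rabs_pos_eq; lra.
  apply rad_ge; auto. lra. apply Hex. lra.
Qed.

Lemma ppow_ex p X : (forall i, 0 <= p i) -> (forall z, 0 < z < X -> ex_pseries p z) ->
  forall k z, 0 <= z < X -> ex_pseries (ppow p k) z.
Proof.
  intros Hp Hex k. induction k as [|k IH]; intros z Hz.
  - eexists. apply (fin_series _ z 0). intros n Hn. destruct n. lia. reflexivity.
  - simpl. apply ex_pseries_mult.
    apply (rad_gt _ X); auto. apply (rad_gt _ X); auto. intro; apply ppow_nonneg; auto.
    intros; apply IH; lra.
Qed.

Lemma ppow_is p X y P : (forall i, 0 <= p i) -> (forall z, 0 < z < X -> ex_pseries p z) ->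
  0 <= y < X -> is_pseries p y P -> forall k, is_pseries (ppow p k) y (P ^ k).
Proof.
  intros Hp Hex Hy HP k. induction k as [|k IH].
  - replace (P ^ 0) with (sum_f_R0 (fun n => ppow p 0 n * y ^ n) 0) by (simpl; ring).
    apply fin_series. intros n Hn. destruct n. lia. reflexivity.
  - simpl. apply is_pseries_mult; [exact HP|exact IH| apply (rad_gt _ X); auto |].
    apply (rad_gt _ X). intro; apply ppow_nonneg; auto.
    intros z Hz. apply (ppow_ex p X); auto. lra. auto.
Qed.

Lemma isum_ext (f g : nat -> R) l : (forall n, f n = g n) -> infinite_sum f l -> infinite_sum g l.
Proof.
  intros H Hf eps He. destruct (Hf eps He) as [N HN]. exists N. intros n Hn.
  rewrite <- (sum_eq f g) by auto. auto.
Qed.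

Lemma comp_series (w p : nat -> R) y P Wv :
  (forall k, 0 <= w k) -> (forall n, 0 <= p n) -> p 0%nat = 0 -> 0 <= y ->
  (forall k, is_pseries (ppow p k) y (P ^ k)) -> is_pseries w P Wv ->
  is_pseries (compc w p) y Wv.
Proof.
  intros Hw Hp Hp0 Hy Hk HW. apply ps_is.
  apply ps_is in HW.
  apply isum_ext with (fun n => sum_f_R0 (fun k => w k * (ppow p k n * y ^ n)) n).
  { intro n. unfold compc. rewrite (Rmult_comm _ (y ^ n)), scal_sum. apply sum_eq.
    intros; ring. }
  apply (tonelli_tri (fun k n => w k * (ppow p k n * y ^ n)) (fun k => w k * P ^ k)); auto.
  - intros k n. apply Rmult_le_pos; auto. apply Rmult_le_pos. apply ppow_nonneg; auto. apply pow_le; auto.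
  - intros k n Hkn. rewrite ppow_lt by auto. ring.
  - intro k. specialize (Hk k). apply ps_is in Hk.
    apply isum_ext with (fun n => w k * (ppow p k n * y ^ n)). reflexivity.
    intros eps He. destruct (Req_dec (w k) 0) as [Z|Z].
    + exists 0%nat. intros n _. unfold R_dist. rewrite Z, Rmult_0_l.
      rewrite sum_eq_R0 by (intros; ring). rewrite Rminus_diag, Rabs_R0. lra.
    + destruct (Hk (eps / Rabs (w k))) as [N HN].
      apply Rdiv_lt_0_compat; auto. apply Rabs_pos_lt; auto.
      exists N. intros n Hn. specialize (HN n Hn). unfold R_dist in *.
      replace (sum_f_R0 (fun n0 : nat => w k * (ppow p k n0 * y ^ n0)) n - w k * P ^ k)
        with (w k * (sum_f_R0 (fun n0 : nat => ppow p k n0 * y ^ n0) n - P ^ k)).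
      2:{ rewrite Rmult_minus_distr_l, scal_sum. f_equal. apply sum_eq; intros; ring. }
      rewrite Rabs_mult.
      apply Rabs_pos_lt in Z.
      apply Rmult_lt_compat_l with (r := Rabs (w k)) in HN; auto.
      replace (Rabs (w k) * (eps / Rabs (w k))) with eps in HN by (field; lra). exact HN.
Qed.

Definition wc (a : nat -> R) (n : nat) : R :=
  match n with O => 0 | S O => 1 | S (S k) => a k end.

Definition Tm (a p : nat -> R) (n : nat) : R :=
  match n with
  | O => 0
  | S O => 1
  | S (S m) => sum_f_R0 (fun j => a j * ppow p (S (S j)) (S (S m))) m / INR (S m)
  end.

Fixpoint gfun (a : nat -> R) (m : nat) : nat -> R :=
  match m with
  | O => fun n => match n with S O => 1 | _ => 0 end
  | S m => Tm a (gfun a m)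
  end.

Definition gs (a : nat -> R) (n : nat) : R := gfun a n n.

Lemma gfun0 a m : gfun a m 0 = 0.
Proof. destruct m; reflexivity. Qed.

Lemma Tm_dep a p q n : p 0%nat = 0 -> q 0%nat = 0 -> (forall i, (i < n)%nat -> p i = q i) ->
  Tm a p n = Tm a q n.
Proof.
  intros Hp Hq H. destruct n as [|[|m]]; try reflexivity. simpl Tm.
  f_equal. apply sum_eq. intros j Hj. f_equal. exact (ppow_agree2 p q (S (S m)) (S j) Hp Hq H ltac:(lia)).
Qed.

Lemma gfun_step a m i : (i <= S m)%nat -> gfun a m i = gfun a (S m) i.
Proof.
  revert i. induction m as [|m IH]; intros i Hi.
  - destruct i as [|[|i]]; try reflexivity. lia.
  - change (gfun a (S (S m)) i) with (Tm a (gfun a (S m)) i).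
    change (gfun a (S m) i) with (Tm a (gfun a m) i).
    apply Tm_dep; try apply gfun0. intros j Hj. apply IH. lia.
Qed.

Lemma gfun_agree a m m' i : (i <= S m)%nat -> (m <= m')%nat -> gfun a m i = gfun a m' i.
Proof.
  intros Hi H. induction H as [|m' H IH]. reflexivity.
  rewrite IH. apply gfun_step. lia.
Qed.

Lemma gs_agree a m i : (i <= S m)%nat -> gs a i = gfun a m i.
Proof.
  intros Hi. unfold gs. destruct (Nat.le_gt_cases i m) as [H|H].
  - apply gfun_agree; lia.
  - replace i with (S m) by lia. symmetry. apply gfun_step. lia.
Qed.

Lemma gs0 a : gs a 0 = 0.
Proof. reflexivity. Qed.

Lemma gs1 a : gs a 1 = 1.
Proof. reflexivity. Qed.

Lemma gs_fix a n : gs a n = Tm a (gs a) n.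
Proof.
  destruct n as [|[|m]]; try reflexivity.
  unfold gs at 1. change (gfun a (S (S m)) (S (S m))) with (Tm a (gfun a (S m)) (S (S m))). apply Tm_dep. apply gfun0. reflexivity.
  intros i Hi. symmetry. apply gs_agree. lia.
Qed.

Lemma Tm_nonneg a p n : (forall k, 0 <= a k) -> (forall i, 0 <= p i) -> 0 <= Tm a p n.
Proof.
  intros Ha Hp. destruct n as [|[|m]]; simpl; try lra.
  apply Rmult_le_pos. apply cond_pos_sum. intro j; apply Rmult_le_pos; auto. exact (ppow_nonneg p (S (S j)) (S (S m)) Hp).
  apply Rlt_le, Rinv_0_lt_compat. exact (lt_0_INR (S m) ltac:(lia)).
Qed.

Lemma gfun_nonneg a m n : (forall k, 0 <= a k) -> 0 <= gfun a m n.
Proof.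
  intros Ha. revert n. induction m as [|m IH]; intro n.
  - destruct n as [|[|n]]; simpl; lra.
  - simpl. apply Tm_nonneg; auto.
Qed.

Lemma gs_nonneg a n : (forall k, 0 <= a k) -> 0 <= gs a n.
Proof. intros; apply gfun_nonneg; auto. Qed.

Lemma wc_nonneg a k : (forall k, 0 <= a k) -> 0 <= wc a k.
Proof. intros Ha. destruct k as [|[|k]]; simpl; auto; lra. Qed.

Lemma compc_T a p n : p 0%nat = 0 ->
  compc (wc a) p n = p n + INR (n - 1) * Tm a p n.
Proof.
  intros Hp. unfold compc. destruct n as [|[|m]].
  - simpl. rewrite Hp. ring.
  - simpl. unfold PS_mult. simpl. ring.
  - rewrite decomp_sum by lia. simpl pred. rewrite decomp_sum by lia. simpl pred.
    rewrite ppow_1. replace (S (S m) - 1)%nat with (S m) by lia.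
    change (Tm a p (S (S m))) with
      (sum_f_R0 (fun j => a j * ppow p (S (S j)) (S (S m))) m / INR (S m)).
    change (wc a 0) with 0. change (wc a 1) with 1.
    change (sum_f_R0 (fun i => wc a (S (S i)) * ppow p (S (S i)) (S (S m))) m) with
      (sum_f_R0 (fun j => a j * ppow p (S (S j)) (S (S m))) m).
    field. apply not_0_INR. lia.
Qed.

Definition pN (a : nat -> R) (N : nat) (n : nat) : R :=
  if (n <=? N)%nat then gs a n else 0.

Lemma compc_gs a n : compc (wc a) (gs a) n = INR n * gs a n.
Proof.
  rewrite compc_T by reflexivity. rewrite <- gs_fix.
  destruct n. simpl. rewrite gs0. ring.
  replace (S n - 1)%nat with n by lia. rewrite S_INR. ring.
Qed.

Lemma compc_trunc a N n : (n <= N)%nat -> compc (wc a) (pN a N) n = INR n * gs a n.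
Proof.
  intros Hn. rewrite compc_T by reflexivity.
  assert (E : pN a N n = gs a n) by (unfold pN; rewrite (proj2 (Nat.leb_le n N)); auto).
  rewrite E. rewrite (Tm_dep a (pN a N) (gs a)). rewrite <- gs_fix.
  destruct n. simpl. rewrite gs0. ring.
  replace (S n - 1)%nat with n by lia. rewrite S_INR. ring.
  reflexivity. reflexivity.
  intros i Hi. unfold pN. rewrite (proj2 (Nat.leb_le i N)); auto. lia.
Qed.

Lemma der_cont f x l : is_derive f x l -> continuity_pt f x.
Proof.
  intros H. apply continuity_pt_filterlim. apply (ex_derive_continuous f x). now exists l.
Qed.

Lemma der_comp f g x df dg : is_derive f (g x) df -> is_derive g x dg ->
  is_derive (fun t => f (g t)) x (df * dg).
Proof.
  intros H1 H2. rewrite Rmult_comm. exact (is_derive_comp f g x df dg H1 H2).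
Qed.

Lemma der_minus f g x df dg : is_derive f x df -> is_derive g x dg ->
  is_derive (fun t => f t - g t) x (df - dg).
Proof. intros H1 H2. exact (is_derive_minus f g x df dg H1 H2). Qed.

Lemma der_plus f g x df dg : is_derive f x df -> is_derive g x dg ->
  is_derive (fun t => f t + g t) x (df + dg).
Proof. intros H1 H2. exact (is_derive_plus f g x df dg H1 H2). Qed.

Lemma mvt (f df : R -> R) a b : a <= b -> (forall x, a <= x <= b -> is_derive f x (df x)) ->
  exists c, a <= c <= b /\ f b - f a = df c * (b - a).
Proof.
  intros Hab H. destruct (Req_dec a b) as [E|E].
  - subst. exists b. split. lra. ring.
  - destruct (MVT_gen f a b df) as [c [Hc Hc2]].
    + intros x Hx. rewrite Rmin_left, Rmax_right in Hx by lra. apply H. lra.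
    + intros x Hx. rewrite Rmin_left, Rmax_right in Hx by lra. apply der_cont with (df x). apply H. lra.
    + rewrite Rmin_left, Rmax_right in Hc by lra. exists c. auto.
Qed.

Lemma U_nonneg a x u : (forall k, 0 <= a k) -> 0 < x -> is_pseries a x u -> 0 <= u.
Proof.
  intros Ha Hx H. apply ps_is in H. apply Rle_trans with (sum_f_R0 (fun n => a n * x ^ n) 0).
  simpl. rewrite Rmult_1_r. auto. apply psum_le_lim; auto. intro; apply Rmult_le_pos; auto; apply pow_le; lra.
Qed.

Lemma U_mono a x y u v : (forall k, 0 <= a k) -> 0 < x <= y -> is_pseries a x u -> is_pseries a y v -> u <= v.
Proof.
  intros Ha Hxy H1 H2. apply ps_is in H1. apply ps_is in H2.
  refine (Rle_cv_lim _ H1 H2). intro N. apply sum_Rle. intros n _.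
  apply Rmult_le_compat_l; auto. apply pow_incr; lra.
Qed.

Definition d0 (n : nat) : R := match n with O => 1 | _ => 0 end.

Lemma wc_series a x u : is_pseries a x u -> is_pseries (wc a) x (x * (1 + x * u)).
Proof.
  intros H.
  assert (H1 : is_pseries d0 x 1).
  { replace 1 with (sum_f_R0 (fun n => d0 n * x ^ n) 0) by (simpl; ring).
    apply fin_series. intros [|n] Hn. lia. reflexivity. }
  apply is_pseries_incr_1 in H1. apply (is_pseries_incr_n _ 2) in H.
  pose proof (is_pseries_plus _ _ _ _ _ H1 H) as H3.
  apply (is_pseries_ext _ (wc a)) in H3.
  2:{ intros [|[|n]]; unfold PS_plus, PS_incr_1; simpl; unfold plus, zero; simpl; ring. }
  replace (x * (1 + x * u)) with (plus (scal x 1) (scal (pow_n x 2) u)). exact H3.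
  rewrite pow_n_pow. change (x * 1 + x ^ 2 * u = x * (1 + x * u)). ring.
Qed.

Definition poly (g : nat -> R) N t := sum_f_R0 (fun n => g n * t ^ n) N.
Definition dpoly (g : nat -> R) N t := sum_f_R0 (fun n => g n * (INR n * t ^ pred n)) N.

Lemma der_mon (c : R) n t : is_derive (fun t => c * t ^ n) t (c * (INR n * t ^ pred n)).
Proof. auto_derive. auto. ring. Qed.

Lemma poly_der g N t : is_derive (poly g N) t (dpoly g N t).
Proof.
  unfold poly, dpoly. induction N as [|N IH].
  - apply der_mon.
  - apply (der_plus (fun t => sum_f_R0 (fun n => g n * t ^ n) N) (fun t => g (S N) * t ^ (S N))).
    exact IH. apply der_mon.
Qed.

Lemma poly_cont g N : continuity (poly g N).
Proof. intro t. apply der_cont with (dpoly g N t). apply poly_der. Qed.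

Lemma t_dpoly g N t : t * dpoly g N t = sum_f_R0 (fun n => INR n * g n * t ^ n) N.
Proof.
  unfold dpoly. rewrite scal_sum. apply sum_eq. intros [|n] _. simpl; ring.
  simpl pred. simpl pow. ring.
Qed.

Lemma poly_pN a N t : is_pseries (pN a N) t (poly (gs a) N t).
Proof.
  unfold poly. rewrite (sum_eq (fun n => gs a n * t ^ n) (fun n => pN a N n * t ^ n)).
  apply fin_series. intros n Hn. unfold pN. rewrite (proj2 (Nat.leb_gt n N)); auto.
  intros n Hn. unfold pN. rewrite (proj2 (Nat.leb_le n N)); auto.
Qed.

Lemma pN_nonneg a N n : (forall k, 0 <= a k) -> 0 <= pN a N n.
Proof. intros Ha. unfold pN. destruct (n <=? N)%nat. apply gs_nonneg; auto. lra. Qed.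

Lemma pN_ex a N z : ex_pseries (pN a N) z.
Proof. eexists. apply poly_pN. Qed.

Lemma poly_mono g N s t : (forall n, 0 <= g n) -> 0 <= s <= t -> poly g N s <= poly g N t.
Proof.
  intros Hg H. unfold poly. apply sum_Rle. intros n _. apply Rmult_le_compat_l; auto.
  apply pow_incr; lra.
Qed.

Lemma poly_at0 a N : poly (gs a) N 0 = 0.
Proof.
  unfold poly. apply sum_eq_R0. intros [|n] _. rewrite gs0. ring. simpl. ring.
Qed.

Lemma poly_ge a N t : (forall k, 0 <= a k) -> (1 <= N)%nat -> 0 <= t -> t <= poly (gs a) N t.
Proof.
  intros Ha HN Ht. unfold poly.
  apply Rle_trans with (gs a 1 * t ^ 1). rewrite gs1. simpl. lra.
  apply (psum_le_term (fun n => gs a n * t ^ n)); auto.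
  intro n. apply Rmult_le_pos. apply gs_nonneg; auto. apply pow_le; auto.
Qed.

Lemma poly_eps a N e y1 : (forall k, 0 <= a k) -> 0 < e <= y1 ->
  poly (gs a) (S N) e <= e + (e / y1) ^ 2 * poly (gs a) (S N) y1.
Proof.
  intros Ha He. unfold poly. induction N as [|N IH].
  - simpl. rewrite gs0, gs1. assert (0 <= (e/y1)^2) by apply pow2_ge_0.
    assert (0 <= (e / y1) ^ 2 * y1) by (apply Rmult_le_pos; lra).
    nra.
  - rewrite (tech5 (fun n => gs a n * e ^ n) (S N)), (tech5 (fun n => gs a n * y1 ^ n) (S N)). rewrite Rmult_plus_distr_l.
    assert (gs a (S (S N)) * e ^ S (S N) <= (e / y1) ^ 2 * (gs a (S (S N)) * y1 ^ S (S N))).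
    { replace ((e / y1) ^ 2 * (gs a (S (S N)) * y1 ^ S (S N))) with
        (gs a (S (S N)) * (e ^ 2 * y1 ^ N)) by (simpl; field; lra).
      apply Rmult_le_compat_l. apply gs_nonneg; auto.
      replace (S (S N)) with (2 + N)%nat by lia. rewrite pow_add.
      apply Rmult_le_compat_l. apply pow_le; lra. apply pow_incr; lra. }
    lra.
Qed.

Lemma ln_le_m1 u : 0 < u -> ln u <= u - 1.
Proof.
  intros Hu. rewrite <- (ln_exp (u - 1)). apply ln_le; auto.
  generalize (exp_ineq1_le (u - 1)). lra.
Qed.

Section Boot.
Lemma Kbound (Rad : R) (a : nat -> R) (U F : R -> R) r :
  0 < r < Rad -> (forall k, 0 <= a k) ->
  (forall x, 0 < x < Rad -> is_pseries a x (U x)) ->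
  (forall z, 0 < z < Rad -> is_derive F z (1 / (z * (1 + z * U z)))) ->
  forall z, 0 < z <= r -> F z - ln z <= F r - ln r + r * U r.
Proof.
  intros Hr Ha HU HF z Hz.
  destruct (mvt (fun t => F t - ln t) (fun t => 1 / (t * (1 + t * U t)) - / t) z r) as [c [Hc Hc2]].
  lra. intros x Hx. apply der_minus. apply HF; lra. apply is_derive_ln; lra.
  assert (HUc : 0 <= U c). { apply U_nonneg with a c; auto. lra. apply HU; lra. }
  assert (HUcr : U c <= U r). { apply U_mono with a c r; auto. lra. apply HU; lra. }
  assert (E : 1 / (c * (1 + c * U c)) - / c = - (U c / (1 + c * U c))).
  { field. split; nra. }
  rewrite E in Hc2.
  assert (U c / (1 + c * U c) <= U c).
  { apply Rmult_le_reg_r with (1 + c * U c). nra. unfold Rdiv. rewrite Rmult_assoc, Rinv_l by nra. nra. }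
  assert (0 <= U c / (1 + c * U c)) by (apply Rdiv_le_0_compat; nra).
  nra.
Qed.
End Boot.

Lemma boot (Rad : R) (a : nat -> R) (U F : R -> R) r :
  0 < r < Rad -> (forall k, 0 <= a k) ->
  (forall x, 0 < x < Rad -> is_pseries a x (U x)) ->
  (forall z, 0 < z < Rad -> is_derive F z (1 / (z * (1 + z * U z)))) ->
  forall N y, 0 < y < r * exp (- (r * U r)) -> poly (gs a) N y < r.
Proof.
  intros Hr Ha HU HF N y Hy.
  destruct N as [|N]. { unfold poly; simpl. rewrite gs0. lra. }
  set (P := poly (gs a) (S N)).
  apply Rnot_le_lt; intro Hge.
  destruct (IVT_cor (fun t => P t - r) 0 y) as [y1 [Hy1 Hy1e]].
  { intro t. apply der_cont with (dpoly (gs a) (S N) t - 0). apply der_minus.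
    apply poly_der. apply (is_derive_const (K := R_AbsRing) (V := R_NormedModule)). }
  lra.
  { unfold P. rewrite poly_at0. fold P. nra. }
  assert (HP0 : P 0 = 0) by apply poly_at0.
  assert (Hy1p : 0 < y1).
  { destruct (Req_dec y1 0) as [E|E]. rewrite E, HP0 in Hy1e. lra. lra. }
  assert (HPy1 : P y1 = r) by lra.
  assert (HPt : forall t, 0 < t <= y1 -> t <= P t <= r).
  { intros t Ht. split. apply poly_ge; auto. lia. lra.
    rewrite <- HPy1. apply poly_mono. intro; apply gs_nonneg; auto. lra. }
  set (Wf := fun t => P t * (1 + P t * U (P t))).
  assert (HUP : forall t, 0 < t <= y1 -> 0 <= U (P t)).
  { intros t Ht. destruct (HPt t Ht). apply U_nonneg with a (P t); auto. lra. apply HU; lra. }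
  assert (HW : forall t, 0 < t <= y1 -> t * dpoly (gs a) (S N) t <= Wf t).
  { intros t Ht. destruct (HPt t Ht) as [h1 h2].
    rewrite t_dpoly.
    rewrite (sum_eq _ (fun n => compc (wc a) (pN a (S N)) n * t ^ n)).
    2:{ intros n Hn. rewrite compc_trunc; auto. }
    apply psum_le_lim. intro n. apply Rmult_le_pos.
    unfold compc. apply cond_pos_sum. intro k. apply Rmult_le_pos. apply wc_nonneg; auto.
    apply ppow_nonneg. intro; apply pN_nonneg; auto. apply pow_le; lra.
    apply ps_is. apply comp_series with (P t).
    intro; apply wc_nonneg; auto. intro; apply pN_nonneg; auto.
    unfold pN; simpl; apply gs0. lra.
    apply ppow_is with (t + 1). intro; apply pN_nonneg; auto. intros; apply pN_ex. lra.
    apply poly_pN.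
    apply wc_series. apply HU. lra. }
  set (dPhi := fun t => 1 / (P t * (1 + P t * U (P t))) * dpoly (gs a) (S N) t - / t).
  assert (Hder : forall t, 0 < t <= y1 -> is_derive (fun t => F (P t) - ln t) t (dPhi t)).
  { intros t Ht. destruct (HPt t Ht). apply der_minus. apply der_comp.
    apply HF. lra. apply poly_der. apply is_derive_ln. lra. }
  assert (Hneg : forall t, 0 < t <= y1 -> dPhi t <= 0).
  { intros t Ht. destruct (HPt t Ht). specialize (HW t Ht). specialize (HUP t Ht).
    unfold Wf in HW. unfold dPhi.
    assert (Wp : 0 < P t * (1 + P t * U (P t))) by (apply Rmult_lt_0_compat; nra).
    replace (1 / (P t * (1 + P t * U (P t))) * dpoly (gs a) (S N) t - / t) with
      ((t * dpoly (gs a) (S N) t - P t * (1 + P t * U (P t))) * / (P t * (1 + P t * U (P t)) * t))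
      by (assert (P t <> 0) by lra; assert (1 + P t * U (P t) <> 0) by nra; field; repeat split; auto; lra).
    assert (0 < / (P t * (1 + P t * U (P t)) * t)) by (apply Rinv_0_lt_compat; nra).
    nra. }
  set (K := F r - ln r + r * U r).
  assert (Hln : ln y1 < ln r - r * U r).
  { apply Rle_lt_trans with (ln y). apply ln_le; lra.
    replace (ln r - r * U r) with (ln (r * exp (-(r*U r)))) by (rewrite ln_mult, ln_exp; [ring| lra | apply exp_pos]).
    apply ln_increasing; lra. }
  assert (Heps : forall e, 0 < e < y1 -> F r - ln y1 <= K + e * r / y1 ^ 2).
  { intros e He.
    destruct (mvt (fun t => F (P t) - ln t) dPhi e y1) as [c [Hc Hc2]]. lra.
    intros x Hx; apply Hder; lra.
    assert (dPhi c * (y1 - e) <= 0). { assert (dPhi c <= 0) by (apply Hneg; lra). nra. }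
    rewrite HPy1 in Hc2.
    destruct (HPt e ltac:(lra)) as [h1 h2].
    assert (k1 : F (P e) - ln (P e) <= K) by (apply (Kbound Rad a U F r); auto; lra).
    assert (k2 : ln (P e / e) <= P e / e - 1) by (apply ln_le_m1; apply Rdiv_lt_0_compat; lra).
    rewrite ln_div in k2 by lra.
    assert (k3 : P e <= e + (e / y1) ^ 2 * P y1) by (apply poly_eps; auto; lra).
    rewrite HPy1 in k3.
    assert (k4 : P e / e - 1 <= e * r / y1 ^ 2).
    { apply Rmult_le_reg_r with e. lra.
      replace ((P e / e - 1) * e) with (P e - e) by (field; lra).
      replace (e * r / y1 ^ 2 * e) with ((e / y1) ^ 2 * r) by (field; lra). lra. }
    lra. }
  assert (Hd : 0 < ln r - r * U r - ln y1) by lra.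
  set (d := ln r - r * U r - ln y1) in *.
  assert (Hr0 : 0 < r) by lra.
  set (e := Rmin (y1 / 2) (d * y1 ^ 2 / (2 * r))).
  assert (He1 : 0 < e).
  { unfold e. apply Rmin_pos. lra. apply Rdiv_lt_0_compat. apply Rmult_lt_0_compat; auto. apply pow_lt; lra. lra. }
  assert (He2 : e <= d * y1 ^ 2 / (2 * r)) by apply Rmin_r.
  assert (He3 : e <= y1 / 2) by apply Rmin_l.
  specialize (Heps e ltac:(lra)).
  assert (e * r / y1 ^ 2 <= d / 2).
  { assert (0 < y1 ^ 2) by (apply pow_lt; lra).
    apply Rmult_le_reg_r with (y1 ^ 2 / r). apply Rdiv_lt_0_compat; lra.
    replace (e * r / y1 ^ 2 * (y1 ^ 2 / r)) with e by (field; lra).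
    replace (d / 2 * (y1 ^ 2 / r)) with (d * y1 ^ 2 / (2 * r)) by (field; lra). lra. }
  unfold K in Heps. unfold d in *. lra.
Qed.

Lemma const_on (f : R -> R) a b x y : (forall t, a < t < b -> is_derive f t 0) ->
  a < x < b -> a < y < b -> f x = f y.
Proof.
  intros H Hx Hy. destruct (Rle_dec x y) as [L|L].
  - destruct (mvt f (fun _ => 0) x y L) as [c [Hc E]]. intros t Ht; apply H; lra. lra.
  - destruct (mvt f (fun _ => 0) y x ltac:(lra)) as [c [Hc E]]. intros t Ht; apply H; lra. lra.
Qed.

Lemma isum_scal (f : nat -> R) l c : infinite_sum f l -> infinite_sum (fun n => c * f n) (c * l).
Proof.
  intros H. apply (isum_ext (fun n => f n * c)). intro; ring.
  intros eps He. destruct (Req_dec c 0) as [Z|Z].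
  - exists 0%nat. intros n _. unfold R_dist. rewrite <- scal_sum, Z. rewrite !Rmult_0_l, Rminus_diag, Rabs_R0. lra.
  - destruct (H (eps / Rabs c)) as [N HN]. apply Rdiv_lt_0_compat; auto. apply Rabs_pos_lt; auto.
    exists N. intros n Hn. specialize (HN n Hn). unfold R_dist in *.
    rewrite <- scal_sum, <- Rmult_minus_distr_l, Rabs_mult.
    apply Rabs_pos_lt in Z.
    apply Rmult_lt_compat_l with (r := Rabs c) in HN; auto.
    replace (Rabs c * (eps / Rabs c)) with eps in HN by (field; lra). exact HN.
Qed.

Lemma F_strict (Rad : R) (a : nat -> R) (U F : R -> R) :
  (forall k, 0 <= a k) ->
  (forall x, 0 < x < Rad -> is_pseries a x (U x)) ->
  (forall z, 0 < z < Rad -> is_derive F z (1 / (z * (1 + z * U z)))) ->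
  forall x y, 0 < x < Rad -> 0 < y < Rad -> x < y -> F x < F y.
Proof.
  intros Ha HU HF x y Hx Hy Hxy.
  destruct (mvt F (fun t => 1 / (t * (1 + t * U t))) x y) as [c [Hc E]]. lra.
  intros t Ht; apply HF; lra.
  assert (0 <= U c) by (apply U_nonneg with a c; auto; [lra | apply HU; lra]).
  assert (0 < 1 / (c * (1 + c * U c))) by (apply Rdiv_lt_0_compat; nra).
  nra.
Qed.

Theorem theorem3 (Rad : R) (a : nat -> R) (U F G omega : R -> R) :
  0 < Rad ->
  (forall k, 0 <= a k) ->
  (forall x, 0 < x < Rad -> is_pseries a x (U x)) ->
  (forall z, 0 < z < Rad ->
     is_derive F z (1 / (z * (1 + z * U z)))) ->
  (forall z, 0 < z < Rad ->
     is_derive G z (z / (z * (1 + z * U z)))) ->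
  (forall z, 0 < z < Rad -> omega (exp (F z)) = exp (G z)) ->
  exists (c : nat -> R) (rho : R),
    0 < rho /\
    (forall k, 0 <= c k) /\
    (forall y, 0 < y < rho ->
       (exists z, 0 < z < Rad /\ exp (F z) = y) /\ is_pseries c y (omega y)) /\
    psd_covariance c rho (fun x => x * (1 + x * U x)).
Proof.
  intros HRad Ha HU HF HG Hom.
  set (r := Rad / 2).
  assert (Hr : 0 < r < Rad) by (unfold r; lra).
  set (rho := r * exp (- (r * U r))).
  assert (Hrho : 0 < rho) by (apply Rmult_lt_0_compat; [lra | apply exp_pos]).
  set (g := gs a).
  assert (Hg : forall n, 0 <= g n) by (intro; apply gs_nonneg; auto).
  assert (Hg0 : g 0%nat = 0) by apply gs0.
  set (W := fun x => x * (1 + x * U x)).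
  assert (HUnn : forall x, 0 < x < Rad -> 0 <= U x).
  { intros x Hx. apply U_nonneg with a x; auto. lra. }
  assert (HWp : forall x, 0 < x < Rad -> 0 < W x).
  { intros x Hx. unfold W. specialize (HUnn x Hx). nra. }
  assert (HgS : forall y, 0 < y < rho -> is_pseries g y (PSeries g y) /\ y <= PSeries g y <= r).
  { intros y Hy.
    destruct (pseries_bounded (fun n => g n * y ^ n) r) as [l [Hl Hlr]].
    intro n; apply Rmult_le_pos; auto; apply pow_le; lra.
    intro N. apply Rlt_le. apply (boot Rad a U F r); auto.
    assert (Hl' : is_pseries g y l) by (apply ps_is; auto).
    rewrite (is_pseries_unique _ _ _ Hl'). split; auto. split; auto.
    apply Rle_trans with (poly g 1 y). apply poly_ge; auto; lra.
    apply psum_le_lim; auto. intro n; apply Rmult_le_pos; auto; apply pow_le; lra. }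
  set (Pf := PSeries g).
  assert (Hexg : forall z, 0 < z < rho -> ex_pseries g z).
  { intros z Hz. eexists. apply (HgS z Hz). }
  assert (Hradg : forall y, 0 <= y < rho -> Rbar_lt (Rabs y) (CV_radius g)).
  { intros y Hy. apply rad_gt with rho; auto. }
  set (D := PSeries (PS_derive g)).
  assert (HPder : forall y, 0 < y < rho -> is_derive Pf y (D y)).
  { intros y Hy. apply is_derive_PSeries. apply Hradg; lra. }
  assert (HPin : forall y, 0 < y < rho -> 0 < Pf y < Rad).
  { intros y Hy. destruct (HgS y Hy) as [_ [h1 h2]]. unfold Pf. lra. }
  assert (HODE : forall y, 0 < y < rho -> y * D y = W (Pf y)).
  { intros y Hy.
    assert (H1 : is_pseries (fun n => INR n * g n) y (y * D y)).
    { assert (h := is_pseries_incr_1 _ _ _ (PSeries_correct (PS_derive g) y (ex_pseries_derive g y (Hradg y ltac:(lra))))).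
      apply (is_pseries_ext _ (fun n => INR n * g n)) in h. exact h.
      intros [|n]. simpl. rewrite Hg0. unfold zero; simpl; ring. reflexivity. }
    assert (H2 : is_pseries (compc (wc a) g) y (W (Pf y))).
    { apply comp_series with (Pf y). intro; apply wc_nonneg; auto. auto. auto. lra.
      apply ppow_is with rho; auto. lra. apply (HgS y Hy).
      apply wc_series. apply HU. apply HPin; auto. }
    apply (is_pseries_ext _ (fun n => INR n * g n)) in H2.
    2:{ intro n. apply compc_gs. }
    rewrite <- (is_pseries_unique _ _ _ H1). apply is_pseries_unique. exact H2. }
  set (kap := F (Pf (rho / 2)) - ln (rho / 2)).
  assert (Hkap : forall y, 0 < y < rho -> F (Pf y) = kap + ln y).
  { intros y Hy. unfold kap.
    assert (E : (fun t => F (Pf t) - ln t) y = (fun t => F (Pf t) - ln t) (rho / 2)).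
    { apply (const_on (fun t => F (Pf t) - ln t) 0 rho); try lra.
      intros t Ht. replace 0 with (1 / (Pf t * (1 + Pf t * U (Pf t))) * D t - / t).
      apply der_minus. apply der_comp. apply HF. apply HPin; auto. apply HPder; auto.
      apply is_derive_ln; lra.
      assert (h := HODE t Ht). assert (h2 := HWp (Pf t) (HPin t Ht)). unfold W in h, h2.
      assert (h4 := HPin t Ht).
      assert (Dt : D t = Pf t * (1 + Pf t * U (Pf t)) / t).
      { apply Rmult_eq_reg_l with t. rewrite h. field. lra. lra. }
      rewrite Dt. field. repeat split; try lra; nra. }
    simpl in E. lra. }
  set (rs := fun n => match n with O => 0 | S m => g (S m) / INR (S m) end).
  assert (Hrs : forall n, 0 <= rs n <= g n).
  { intros [|n]. unfold rs. rewrite Hg0. lra. unfold rs; cbv beta iota. assert (1 <= INR (S n)) by (apply (le_INR 1); lia).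
    split. apply Rdiv_le_0_compat; auto; lra.
    apply Rmult_le_reg_r with (INR (S n)). lra. unfold Rdiv. rewrite Rmult_assoc, Rinv_l by lra.
    generalize (Hg (S n)); nra. }
  assert (HrsS : forall y, 0 < y < rho -> is_pseries rs y (PSeries rs y)).
  { intros y Hy. destruct (pseries_bounded (fun n => rs n * y ^ n) (Pf y)) as [l [Hl _]].
    intro n; apply Rmult_le_pos. apply Hrs. apply pow_le; lra.
    intro N. apply Rle_trans with (sum_f_R0 (fun n => g n * y ^ n) N).
    apply sum_Rle. intros n _. apply Rmult_le_compat_r. apply pow_le; lra. apply Hrs.
    apply psum_le_lim. intro n; apply Rmult_le_pos; auto; apply pow_le; lra.
    apply ps_is. apply (HgS y Hy).
    assert (Hl' : is_pseries rs y l) by (apply ps_is; auto).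
    rewrite (is_pseries_unique _ _ _ Hl'). exact Hl'. }
  set (Rf := PSeries rs).
  assert (Hradr : forall y, 0 <= y < rho -> Rbar_lt (Rabs y) (CV_radius rs)).
  { intros y Hy. apply rad_gt with rho; auto. intro; apply Hrs. intros z Hz. eexists; apply HrsS; auto. }
  set (DR := PSeries (PS_derive rs)).
  assert (HRder : forall y, 0 < y < rho -> is_derive Rf y (DR y)).
  { intros y Hy. apply is_derive_PSeries. apply Hradr; lra. }
  assert (HRODE : forall y, 0 < y < rho -> y * DR y = Pf y).
  { intros y Hy.
    assert (h := is_pseries_incr_1 _ _ _ (PSeries_correct (PS_derive rs) y (ex_pseries_derive rs y (Hradr y ltac:(lra))))).
    apply (is_pseries_ext _ g) in h.
    unfold Pf. rewrite (is_pseries_unique _ _ _ h). reflexivity.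
    intros [|n]. simpl. rewrite Hg0. unfold zero; simpl; ring.
    unfold PS_incr_1, PS_derive. unfold rs; cbv beta iota. unfold Rdiv. rewrite Rmult_comm, Rmult_assoc, Rinv_l, Rmult_1_r. reflexivity. apply not_0_INR; lia. }
  set (kap2 := G (Pf (rho / 2)) - Rf (rho / 2)).
  assert (Hkap2 : forall y, 0 < y < rho -> G (Pf y) = kap2 + Rf y).
  { intros y Hy. unfold kap2.
    assert (E : (fun t => G (Pf t) - Rf t) y = (fun t => G (Pf t) - Rf t) (rho / 2)).
    { apply (const_on (fun t => G (Pf t) - Rf t) 0 rho); try lra.
      intros t Ht. replace 0 with (Pf t / (Pf t * (1 + Pf t * U (Pf t))) * D t - DR t).
      apply der_minus. apply der_comp. apply HG. apply HPin; auto. apply HPder; auto.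
      apply HRder; auto.
      assert (h := HODE t Ht). assert (h2 := HWp (Pf t) (HPin t Ht)). assert (h3 := HRODE t Ht).
      assert (h4 := HPin t Ht). unfold W in h, h2.
      assert (Dt : D t = Pf t * (1 + Pf t * U (Pf t)) / t).
      { apply Rmult_eq_reg_l with t. rewrite h. field. lra. lra. }
      assert (DRt : DR t = Pf t / t).
      { apply Rmult_eq_reg_l with t. rewrite h3. field. lra. lra. }
      rewrite Dt, DRt. field. repeat split; try lra; nra. }
    simpl in E. lra. }
  set (e := fun k => / INR (Factorial.fact k)).
  assert (He : forall k, 0 <= e k) by (intro k; apply Rlt_le, Rinv_0_lt_compat, INR_fact_lt_0).
  assert (HexpS : forall u, 0 < u < rho -> is_pseries (compc e rs) u (exp (Rf u))).
  { intros u Hu. apply comp_series with (Rf u); auto. intro; apply Hrs. lra.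
    apply ppow_is with rho. intro; apply Hrs. intros z Hz; eexists; apply HrsS; auto. lra.
    apply HrsS; auto. apply is_exp_Reals. }
  set (lam := exp (- kap)). set (rf := rho * exp kap).
  assert (Hlam : 0 < lam) by apply exp_pos.
  assert (Hlamrf : lam * rf = rho).
  { unfold lam, rf. rewrite exp_Ropp. field. apply Rgt_not_eq, exp_pos. }
  assert (Hrf : 0 < rf) by (unfold rf; apply Rmult_lt_0_compat; auto; apply exp_pos).
  assert (Hu : forall y, 0 < y < rf -> 0 < lam * y < rho).
  { intros y Hy. split. apply Rmult_lt_0_compat; lra. rewrite <- Hlamrf.
    apply Rmult_lt_compat_l; lra. }
  assert (Hsy : forall y, 0 < y < rf -> exp (F (Pf (lam * y))) = y).
  { intros y Hy. rewrite Hkap by auto. rewrite exp_plus, exp_ln by (apply Hu; auto).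
    unfold lam. rewrite exp_Ropp. field. apply Rgt_not_eq, exp_pos. }
  set (c := fun n => exp kap2 * (compc e rs n * lam ^ n)).
  assert (Hcser : forall y, 0 < y < rf -> is_pseries c y (exp kap2 * exp (Rf (lam * y)))).
  { intros y Hy. apply ps_is. specialize (HexpS (lam * y) (Hu y Hy)). apply ps_is in HexpS.
    apply (isum_scal _ _ (exp kap2)) in HexpS.
    apply (isum_ext _ (fun n => c n * y ^ n)) in HexpS. exact HexpS.
    intro n. unfold c. rewrite Rpow_mult_distr. ring. }
  assert (Home : forall y, 0 < y < rf -> omega y = exp kap2 * exp (Rf (lam * y))).
  { intros y Hy. transitivity (omega (exp (F (Pf (lam * y))))). rewrite Hsy; auto.
    rewrite Hom by (apply HPin, Hu; auto). rewrite Hkap2 by (apply Hu; auto). apply exp_plus. }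
  assert (HPSc : forall t, 0 < t < rf -> PSeries c t = exp kap2 * exp (Rf (lam * t))).
  { intros t Ht. apply is_pseries_unique. apply Hcser; auto. }
  assert (Hmean : forall y, 0 < y < rf -> psd_mean c y = Pf (lam * y)).
  { intros y Hy.
    assert (Hd : is_derive (PSeries c) y (exp kap2 * (exp (Rf (lam * y)) * (DR (lam * y) * lam)))).
    { apply (is_derive_ext_loc (fun t => exp kap2 * exp (Rf (lam * t)))).
      apply (locally_interval _ y 0 rf). simpl; lra. simpl; lra.
      intros t H1 H2. symmetry. apply HPSc. simpl in H1, H2. lra.
      apply is_derive_scal. apply (der_comp exp (fun t => Rf (lam * t))). apply is_derive_exp.
      apply (der_comp Rf (fun t => lam * t)). apply HRder. apply Hu; auto.
      auto_derive; auto; ring. }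
    unfold psd_mean. rewrite (is_derive_unique _ _ _ Hd), HPSc by auto.
    rewrite <- (HRODE (lam * y)) by (apply Hu; auto). field.
    split; apply Rgt_not_eq, exp_pos. }
  exists c, rf. split; [exact Hrf|]. split.
  { intro k. unfold c. apply Rmult_le_pos. apply Rlt_le, exp_pos. apply Rmult_le_pos.
    unfold compc. apply cond_pos_sum. intro j. apply Rmult_le_pos; auto. apply ppow_nonneg. intro; apply Hrs.
    apply pow_le; lra. }
  split.
  { intros y Hy. split. exists (Pf (lam * y)). split. apply HPin, Hu; auto. apply Hsy; auto.
    rewrite Home by auto. apply Hcser; auto. }
  unfold psd_covariance. intros f Hf y Hy.
  rewrite (Hmean y Hy).
  set (x0 := Pf (lam * y)).
  assert (Hx0 : 0 < x0 < Rad) by (apply HPin, Hu; auto).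
  assert (Hex0 : exp (F x0) = y) by (apply Hsy; auto).
  assert (HEF : forall x, 0 < x < Rad -> is_derive (fun t => exp (F t)) x (exp (F x) * (1 / (x * (1 + x * U x))))).
  { intros x Hx. apply (der_comp exp F). apply is_derive_exp. apply HF; auto. }
  assert (Hloc : locally x0 (fun x => exp (F x) = f x)).
  { assert (Hc := der_cont _ _ _ (HEF x0 Hx0)).
    assert (Heps : 0 < Rmin y (rf - y)) by (apply Rmin_pos; lra).
    destruct (proj1 (continuity_pt_locally _ _) Hc (mkposreal _ Heps)) as [d1 Hd1].
    assert (Hl2 : locally x0 (fun x => 0 < x < Rad)).
    { apply (locally_interval _ x0 0 Rad). simpl; lra. simpl; lra. intros t H1 H2; simpl in *; lra. }
    destruct Hl2 as [d2 Hd2].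
    exists (mkposreal _ (Rmin_pos _ _ (cond_pos d1) (cond_pos d2))).
    intros x Hx. simpl in Hx.
    assert (Hxa : ball x0 d1 x) by (apply ball_le with (Rmin d1 d2); auto; apply Rmin_l).
    assert (Hxb : ball x0 d2 x) by (apply ball_le with (Rmin d1 d2); auto; apply Rmin_r).
    specialize (Hd1 x Hxa). specialize (Hd2 x Hxb). simpl in Hd1. rewrite Hex0 in Hd1.
    assert (Hm1 := Rmin_l y (rf - y)). assert (Hm2 := Rmin_r y (rf - y)).
    apply Rabs_def2 in Hd1.
    set (y' := exp (F x)).
    assert (Hy' : 0 < y' < rf) by (unfold y'; lra).
    specialize (Hf y' Hy'). rewrite Hmean in Hf by auto.
    assert (E : Pf (lam * y') = x).
    { assert (E1 : F (Pf (lam * y')) = F x).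
      { apply exp_inv. rewrite Hsy by auto. reflexivity. }
      assert (Hin := HPin _ (Hu _ Hy')).
      destruct (Rtotal_order (Pf (lam * y')) x) as [L|[L|L]]; auto.
      - pose proof (F_strict Rad a U F Ha HU HF _ _ Hin Hd2 L). lra.
      - pose proof (F_strict Rad a U F Ha HU HF _ _ Hd2 Hin L). lra. }
    rewrite E in Hf. rewrite Hf. reflexivity. }
  assert (Hdf : is_derive f x0 (exp (F x0) * (1 / (x0 * (1 + x0 * U x0))))).
  { apply (is_derive_ext_loc _ _ _ _ Hloc). apply HEF; auto. }
  assert (Hfx0 : f x0 = y).
  { unfold x0. rewrite <- (Hmean y Hy). apply Hf; auto. }
  split. eexists; exact Hdf.
  rewrite (is_derive_unique _ _ _ Hdf), Hfx0, Hex0.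
  assert (0 <= U x0) by auto.
  unfold W. field. repeat split; try lra; nra.
Qed.
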